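(* Let $n\ge3$, let $S_n$ act on $V=\mathbb{C}^n$ by permutations, fix $a,b,c\in\mathbb{C}$, let $*\in\{L,C\}$, let $g$ be a $5$-cycle, and let $\phi^*_g$ be the $g$-component of $\phi(\kappa^*_{\mathrm{tri}},\kappa^L_{\mathrm{tri}})$. Then $\phi^C_g\equiv0$. Moreover, if $e_i\in V^g$ then $\phi^L_g(e_i,e_j,e_k)=0$ for all $j,k$, and for $1\leq i\leq n$, $$\phi^L_g(e_i,ge_i,g^2e_i)=2(a-b)^2\big(e_i+ge_i-g^2e_i-g^3e_i\big),$$ $$\phi^L_g(e_i,ge_i,g^3e_i)=2(a-b)^2\big(-2e_i+2g^2e_i+g^3e_i-g^4e_i\big).$$
   Context: $S_n$ acts by $\sigma e_i=e_{\sigma(i)}$; $V^g$ is the fixed space of $g$. $\kappa^L_{\mathrm{tri}}$ is the linear 2-cochain supported on 3-cycles with $\kappa^L_{(ijk)}(e_i,e_j)=\kappa^L_{(ijk)}(e_j,e_k)=\kappa^L_{(ijk)}(e_k,e_i)=a(e_i+e_j+e_k)+b\sum_{l\notin\{i,j,k\}}e_l$ and $\kappa^L_{(ijk)}(e_l,e_m)=0$ whenever $e_l$ or $e_m$ lies in $V^{(ijk)}$; $\kappa^C_{\mathrm{tri}}$ is the constant 2-cochain supported on 3-cycles with $\kappa^C_{(ijk)}(e_i,e_j)=\kappa^C_{(ijk)}(e_j,e_k)=\kappa^C_{(ijk)}(e_k,e_i)=c$ and $\kappa^C_{(ijk)}(e_l,e_m)=0$ whenever $e_l$ or $e_m$ lies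 in $V^{(ijk)}$. For $\alpha$ linear or constant and $\beta$ linear, $\phi(\alpha,\beta)=\sum_g\phi_gg$, $\phi_g=\sum_{xy=g}\phi_{x,y}$, $\phi_{x,y}(v_1,v_2,v_3)=\alpha_x(v_1+yv_1,\beta_y(v_2,v_3))+\alpha_x(v_2+yv_2,\beta_y(v_3,v_1))+\alpha_x(v_3+yv_3,\beta_y(v_1,v_2))$. *)

(* Defs.v *)
From HB Require Import structures.
From mathcomp Require Import all_boot all_order all_algebra all_fingroup.
From mathcomp Require Import complex Rstruct.
Set Implicit Arguments.
Unset Strict Implicit.
Unset Printing Implicit Defensive.
Import Order.TTheory GRing.Theory Num.Theory.
Local Open Scope ring_scope.

Definition CC : numClosedFieldType := (Rdefinitions.R)[i].

Section Defs.
Variable n : nat.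

Definition Vn := 'cV[CC]_n.
Definition evec (i : 'I_n) : Vn := delta_mx i 0.

(* Permutation action: (sigma v)_i = v_{sigma^-1 i}, so sigma e_i = e_{sigma i}. *)
Definition pact (s : 'S_n) (v : Vn) : Vn := \col_i v ((s^-1)%g i) 0.

Definition fixed_space (g : 'S_n) : pred Vn := fun v => pact g v == v.

Definition is_kcycle (k : nat) (g : 'S_n) : bool :=
  [exists i, (#|porbit g i| == k) &&
             [forall j, (j \notin porbit g i) ==> (g j == j)]].

(* For the 3-cycle
   g = (i j k) (i -> j -> k -> i), kappa(e_l, e_{g l}) = w for l moved,
   hence by alternation kappa(e_{g l}, e_l) = -w, and kappa vanishes on
   pairs involving a fixed e_l (and on (e_l,e_l)). *)
Definition kL_w (a b : CC) (g : 'S_n) : Vn :=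
  \col_k (if g k != k then a else b).

Definition kL_basis (a b : CC) (g : 'S_n) (l m : 'I_n) : Vn :=
  if (g l != l) && (m == g l) then kL_w a b g
  else if (g l != l) && (l == g m) then - kL_w a b g
  else 0.

Definition kC_basis (c : CC) (g : 'S_n) (l m : 'I_n) : CC :=
  if (g l != l) && (m == g l) then c
  else if (g l != l) && (l == g m) then - c
  else 0.

Definition kappaL_tri (a b : CC) (g : 'S_n) (u v : Vn) : Vn :=
  if is_kcycle 3 g then
    \sum_(l < n) \sum_(m < n) (u l 0 * v m 0) *: kL_basis a b g l m
  else 0.

Definition kappaC_tri (c : CC) (g : 'S_n) (u v : Vn) : CC :=
  if is_kcycle 3 g then
    \sum_(l < n) \sum_(m < n) (u l 0 * v m 0) * kC_basis c g l m
  else 0.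

Definition phi_xy {W : zmodType} (alpha : 'S_n -> Vn -> Vn -> W)
    (beta : 'S_n -> Vn -> Vn -> Vn) (x y : 'S_n) (v1 v2 v3 : Vn) : W :=
  alpha x (v1 + pact y v1) (beta y v2 v3)
  + alpha x (v2 + pact y v2) (beta y v3 v1)
  + alpha x (v3 + pact y v3) (beta y v1 v2).

(* phi_g = sum over x y = g, the product being composition (x y)(i) = x (y i),
   matching the left action sigma e_i = e_{sigma i}. *)
Definition phi_g {W : zmodType} (alpha : 'S_n -> Vn -> Vn -> W)
    (beta : 'S_n -> Vn -> Vn -> Vn) (g : 'S_n) (v1 v2 v3 : Vn) : W :=
  \sum_(x : 'S_n) \sum_(y : 'S_n | [forall i, g i == x (y i)])
     phi_xy alpha beta x y v1 v2 v3.

End Defs.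

(* Main.v *)
Require Import Defs.
From HB Require Import structures.
From mathcomp Require Import all_boot all_order all_algebra all_fingroup.
From mathcomp Require Import complex Rstruct.
From mathcomp Require Import ring.
Import Order.TTheory GRing.Theory Num.Theory.
Local Open Scope ring_scope.
Set Implicit Arguments.
Unset Strict Implicit.
Unset Printing Implicit Defensive.

Section Basic.
Variable n : nat.
Implicit Types (r l m : 'I_n).

Lemma tpE (T : finType) (x y z : T) :
  tperm x y z = if z == x then y else if z == y then x else z.
Proof.
by rewrite /tperm permE /=.
Qed.

Definition c3 r0 r1 r2 : 'S_n := (tperm r0 r1 * tperm r0 r2)%g.

Ltac neqs := repeat (match goal with
 | h : is_true (?x != ?y) |- context[?x == ?y] => rewrite (negbTE h)
 | h : is_true (?x != ?y) |- context[?y == ?x] => rewrite (eq_sym y x) (negbTE h)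
 | |- context[?x == ?x] => rewrite eqxx
 end; cbn [negb andb orb]).

Lemma c3E r0 r1 r2 l : r0 != r1 -> r0 != r2 -> r1 != r2 ->
  c3 r0 r1 r2 l = if l == r0 then r1 else if l == r1 then r2
                  else if l == r2 then r0 else l.
Proof.
move=> h01 h02 h12; rewrite /c3 permM !tpE.
case: (eqVneq l r0) => [?|hl0]; first by subst; neqs.
case: (eqVneq l r1) => [?|hl1]; first by subst; neqs.
case: (eqVneq l r2) => [?|hl2]; first by subst; neqs.
by neqs.
Qed.

Lemma c3V r0 r1 r2 l : r0 != r1 -> r0 != r2 -> r1 != r2 ->
  (c3 r0 r1 r2)^-1%g l = c3 r0 r2 r1 l.
Proof.
move=> h01 h02 h12.
apply: (@perm_inj _ (c3 r0 r1 r2)); rewrite permKV.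
rewrite !c3E // ?(eq_sym r2 r1) //.
case: (eqVneq l r0) => [?|hl0]; first by subst; neqs.
case: (eqVneq l r1) => [?|hl1]; first by subst; neqs.
case: (eqVneq l r2) => [?|hl2]; first by subst; neqs.
by neqs.
Qed.

Lemma evecE (i r : 'I_n) : evec i r 0 = (r == i)%:R.
Proof. by rewrite /evec mxE eqxx andbT. Qed.

Lemma pactE (s : 'S_n) (v : Vn n) r : pact s v r 0 = v (s^-1%g r) 0.
Proof. by rewrite /pact mxE. Qed.

Lemma permV_eq (s : 'S_n) (r i : 'I_n) : ((s^-1)%g r == i) = (r == s i).
Proof. by apply/eqP/eqP => [<-|->]; rewrite ?permKV ?permK. Qed.

Lemma pact_evec (s : 'S_n) i : pact s (evec i) = evec (s i).
Proof.
apply/matrixP => r j; rewrite ord1 pactE !evecE permV_eq.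
reflexivity.
Qed.

Lemma kLwE a b (s : 'S_n) r : kL_w a b s r 0 = if s r != r then a else b.
Proof. by rewrite /kL_w mxE. Qed.

Lemma sum1 (V : zmodType) (f : 'I_n -> V) r :
  (forall l, l != r -> f l = 0) -> \sum_l f l = f r.
Proof. move=> H; rewrite (bigD1 r) //= big1 ?addr0 // => l /andP[_]; exact: H. Qed.

Lemma sum3 (V : zmodType) (f : 'I_n -> V) r0 r1 r2 : r0 != r1 -> r0 != r2 -> r1 != r2 ->
  (forall l, l != r0 -> l != r1 -> l != r2 -> f l = 0) ->
  \sum_l f l = f r0 + f r1 + f r2.
Proof.
move=> h01 h02 h12 H; rewrite (bigD1 r0) //= (bigD1 r1) /=; last by rewrite eq_sym h01.
rewrite (bigD1 r2) /=; last by rewrite eq_sym h02 eq_sym h12.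
rewrite big1 ?addr0 ?addrA //.
by move=> l /andP[/andP[? ?] ?]; apply: H.
Qed.


Definition Ksc (s : 'S_n) (u v : Vn n) : CC :=
  \sum_(l < n) \sum_(m < n) (u l 0 * v m 0) * kC_basis 1 s l m.

Lemma kL_basisE a b (s : 'S_n) l m :
  kL_basis a b s l m = kC_basis 1 s l m *: kL_w a b s.
Proof.
rewrite /kL_basis /kC_basis; case: ifP => _; first by rewrite scale1r.
by case: ifP => _; rewrite ?scaleN1r ?scale0r.
Qed.

Lemma kC_basisE c (s : 'S_n) l m : kC_basis c s l m = c * kC_basis 1 s l m.
Proof.
rewrite /kC_basis; case: ifP => _; first by rewrite mulr1.
by case: ifP => _; rewrite ?mulrN1 ?mulr0.
Qed.

Lemma kappaLE a b (s : 'S_n) u v : kappaL_tri a b s u v =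
  if is_kcycle 3 s then Ksc s u v *: kL_w a b s else 0.
Proof.
rewrite /kappaL_tri /Ksc; case: ifP => // _.
rewrite scaler_suml; apply: eq_bigr => l _.
rewrite scaler_suml; apply: eq_bigr => m _.
by rewrite kL_basisE scalerA.
Qed.

Lemma kappaCE c (s : 'S_n) u v : kappaC_tri c s u v =
  if is_kcycle 3 s then c * Ksc s u v else 0.
Proof.
rewrite /kappaC_tri /Ksc; case: ifP => // _.
rewrite mulr_sumr; apply: eq_bigr => l _.
rewrite mulr_sumr; apply: eq_bigr => m _.
by rewrite kC_basisE mulrCA.
Qed.

Section C3.
Variables r0 r1 r2 : 'I_n.
Hypotheses (h01 : r0 != r1) (h02 : r0 != r2) (h12 : r1 != r2).

Lemma c3_mem_iter i : iter i (c3 r0 r1 r2) r0 \in [:: r0; r1; r2].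
Proof.
elim: i => [|i IH] /=; first by rewrite inE eqxx.
move: IH; rewrite !inE c3E //.
case/or3P => /eqP ->; neqs; by rewrite ?eqxx ?orbT.
Qed.

Lemma is3_c3 : is_kcycle 3 (c3 r0 r1 r2).
Proof.
have Hp : porbit (c3 r0 r1 r2) r0 =i [:: r0; r1; r2].
  move=> y; apply/porbitP/idP => [[i ->]|]; first by rewrite permX c3_mem_iter.
  rewrite !inE => /or3P [] /eqP ->.
  - by exists 0%N; rewrite expg0 perm1.
  - by exists 1%N; rewrite expg1 c3E //; neqs.
  - by exists 2%N; rewrite permX /= !c3E //; neqs.
apply/existsP; exists r0; apply/andP; split.
  rewrite (eq_card Hp); apply/eqP/card_uniqP.
  by rewrite /= !inE negb_or h01 h02 h12.
apply/forallP => j; apply/implyP; rewrite Hp !inE !negb_or => /and3P [j0 j1 j2].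
by rewrite c3E //; neqs.
Qed.

Lemma Ksc_c3 u v : Ksc (c3 r0 r1 r2) u v =
  u r0 0 * (v r1 0 - v r2 0) + u r1 0 * (v r2 0 - v r0 0) + u r2 0 * (v r0 0 - v r1 0).
Proof.
rewrite /Ksc (sum3 h01 h02 h12); last first.
  move=> l l0 l1 l2; apply: big1 => m _.
  by rewrite /kC_basis c3E //; neqs; rewrite mulr0.
rewrite !(sum3 h01 h02 h12); try by move=> m m0 m1 m2; rewrite /kC_basis !c3E //; neqs; rewrite mulr0.
rewrite /kC_basis !c3E //; neqs.
ring.
Qed.

End C3.
End Basic.


Ltac neqs := repeat (match goal with
 | h : is_true (?x != ?y) |- context[?x == ?y] => rewrite (negbTE h)
 | h : is_true (?x != ?y) |- context[?y == ?x] => rewrite (eq_sym y x) (negbTE h)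
 | |- context[?x == ?x] => rewrite eqxx
 end; cbn [negb andb orb]).

Section Term.
Variable n : nat.
Variables r0 r1 r2 r3 r4 : 'I_n.
Hypotheses (h01 : r0 != r1) (h02 : r0 != r2) (h03 : r0 != r3) (h04 : r0 != r4)
  (h12 : r1 != r2) (h13 : r1 != r3) (h14 : r1 != r4)
  (h23 : r2 != r3) (h24 : r2 != r4) (h34 : r3 != r4).

Definition Sy (s t : Vn n) : CC :=
  s r2 0 * (t r3 0 - t r4 0) + s r3 0 * (t r4 0 - t r2 0) + s r4 0 * (t r2 0 - t r3 0).

Definition Tm (v1 v2 v3 : Vn n) : CC :=
  (v1 r1 0 - v1 r0 0) * Sy v2 v3 + (v2 r1 0 - v2 r0 0) * Sy v3 v1
  + (v3 r1 0 - v3 r0 0) * Sy v1 v2.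

Let h43 : r4 != r3. Proof. by rewrite eq_sym. Qed.

Lemma Ksc_term (v : Vn n) (K : CC) (a b : CC) :
  Ksc (c3 r0 r1 r2) (v + pact (c3 r2 r3 r4) v) (K *: kL_w a b (c3 r2 r3 r4))
  = 2 * K * (a - b) * (v r1 0 - v r0 0).
Proof.
rewrite Ksc_c3 // !mxE ?pactE !c3V // ?kLwE !c3E //; neqs.
ring.
Qed.

Lemma phiC_term c a b v1 v2 v3 :
  phi_xy (kappaC_tri c) (kappaL_tri a b) (c3 r0 r1 r2) (c3 r2 r3 r4) v1 v2 v3
  = 2 * c * (a - b) * Tm v1 v2 v3.
Proof.
rewrite /phi_xy !kappaCE !kappaLE !is3_c3 // !Ksc_term !Ksc_c3 // /Tm /Sy.
ring.
Qed.

Lemma phiL_term a b v1 v2 v3 :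
  phi_xy (kappaL_tri a b) (kappaL_tri a b) (c3 r0 r1 r2) (c3 r2 r3 r4) v1 v2 v3
  = (2 * (a - b) * Tm v1 v2 v3) *: kL_w a b (c3 r0 r1 r2).
Proof.
rewrite /phi_xy !kappaLE !is3_c3 // !Ksc_term !Ksc_c3 // /Tm /Sy.
rewrite -!scalerDl; congr (_ *: _).
ring.
Qed.

End Term.



Section Cyc.
Variable n : nat.

Lemma kcycle3P (x : 'S_n) : is_kcycle 3 x -> exists u,
  [/\ u != x u, u != x (x u), x u != x (x u), x (x (x u)) = u &
      forall j, j != u -> j != x u -> j != x (x u) -> x j = j].
Proof.
case/existsP => u /andP [/eqP H3 /forallP Hf]; exists u.
have U := uniq_traject_porbit x u; rewrite H3 /= !inE !negb_or in U.
case/and3P: U => /andP [h1 h2] h3 _.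
split => //.
  by have := iter_porbit x u; rewrite H3.
move=> j j0 j1 j2; apply/eqP; move/implyP: (Hf j); apply.
by rewrite porbit_traject H3 /= !inE !negb_or j0 j1 j2.
Qed.

Lemma kcycle5P (g : 'S_n) : is_kcycle 5 g -> exists p,
  [/\ uniq [:: p; g p; g (g p); g (g (g p)); g (g (g (g p)))],
      g (g (g (g (g p)))) = p &
      forall j, j \notin [:: p; g p; g (g p); g (g (g p)); g (g (g (g p)))] -> g j = j].
Proof.
case/existsP => p /andP [/eqP H5 /forallP Hf]; exists p.
have U := uniq_traject_porbit g p; rewrite H5 /= in U.
split => //.
  by have := iter_porbit g p; rewrite H5.
move=> j jn; apply/eqP; move/implyP: (Hf j); apply.
by rewrite porbit_traject H5.
Qed.

Lemma perm_c3 (x : 'S_n) r0 r1 r2 : r0 != r1 -> r0 != r2 -> r1 != r2 ->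
  x r0 = r1 -> x r1 = r2 -> x r2 = r0 ->
  (forall j, j != r0 -> j != r1 -> j != r2 -> x j = j) -> x = c3 r0 r1 r2.
Proof.
move=> h01 h02 h12 e0 e1 e2 Hf; apply/permP => j; rewrite c3E //.
case: (eqVneq j r0) => [->|j0] //.
case: (eqVneq j r1) => [->|j1] //.
case: (eqVneq j r2) => [->|j2] //.
exact: Hf.
Qed.

End Cyc.



Section Main.
Variables (n : nat) (g : 'S_n) (p0 p1 p2 p3 p4 : 'I_n).
Hypotheses (h01 : p0 != p1) (h02 : p0 != p2) (h03 : p0 != p3) (h04 : p0 != p4)
  (h12 : p1 != p2) (h13 : p1 != p3) (h14 : p1 != p4)
  (h23 : p2 != p3) (h24 : p2 != p4) (h34 : p3 != p4).
Hypotheses (g0 : g p0 = p1) (g1 : g p1 = p2) (g2 : g p2 = p3) (g3 : g p3 = p4)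
  (g4 : g p4 = p0).
Hypothesis gf : forall j, j \notin [:: p0; p1; p2; p3; p4] -> g j = j.

Let h10 : p1 != p0. Proof. by rewrite eq_sym. Qed.
Let h20 : p2 != p0. Proof. by rewrite eq_sym. Qed.
Let h30 : p3 != p0. Proof. by rewrite eq_sym. Qed.
Let h40 : p4 != p0. Proof. by rewrite eq_sym. Qed.
Let h21 : p2 != p1. Proof. by rewrite eq_sym. Qed.
Let h31 : p3 != p1. Proof. by rewrite eq_sym. Qed.
Let h41 : p4 != p1. Proof. by rewrite eq_sym. Qed.
Let h32 : p3 != p2. Proof. by rewrite eq_sym. Qed.
Let h42 : p4 != p2. Proof. by rewrite eq_sym. Qed.
Let h43 : p4 != p3. Proof. by rewrite eq_sym. Qed.

Lemma gfix j : j != p0 -> j != p1 -> j != p2 -> j != p3 -> j != p4 -> g j = j.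
Proof. by move=> *; apply: gf; rewrite !inE; neqs. Qed.

Definition C0 := c3 p0 p1 p2.
Definition C1 := c3 p1 p2 p3.
Definition C2 := c3 p2 p3 p4.
Definition C3 := c3 p3 p4 p0.
Definition C4 := c3 p4 p0 p1.

Lemma invP (s : 'S_n) a b : s b = a -> (s^-1)%g a = b.
Proof. by move<-; rewrite permK. Qed.

Ltac pcases j :=
  case: (eqVneq j p0) => [->|?];
  [|case: (eqVneq j p1) => [->|?];
  [|case: (eqVneq j p2) => [->|?];
  [|case: (eqVneq j p3) => [->|?];
  [|case: (eqVneq j p4) => [->|?]]]]].

Ltac solve_gC :=
  apply/permP; let j := fresh "j" in intro j; rewrite permM;
  apply: invP;
  rewrite /C0 /C1 /C2 /C3 /C4 !c3E //; try (rewrite eq_sym; done);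
  pcases j; neqs; rewrite ?g0 ?g1 ?g2 ?g3 ?g4 ?gfix //.

Lemma gC0 : (g * C0^-1)%g = C2. Proof. solve_gC. Qed.
Lemma gC1 : (g * C1^-1)%g = C3. Proof. solve_gC. Qed.
Lemma gC2 : (g * C2^-1)%g = C4. Proof. solve_gC. Qed.
Lemma gC3 : (g * C3^-1)%g = C0. Proof. solve_gC. Qed.
Lemma gC4 : (g * C4^-1)%g = C1. Proof. solve_gC. Qed.


Ltac cne := apply/eqP => /permP H;
  first [ have := H p0; rewrite /C0 /C1 /C2 /C3 /C4 !c3E //; neqs; move/eqP; neqs; done
        | have := H p1; rewrite /C0 /C1 /C2 /C3 /C4 !c3E //; neqs; move/eqP; neqs; done
        | have := H p2; rewrite /C0 /C1 /C2 /C3 /C4 !c3E //; neqs; move/eqP; neqs; done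
        | have := H p3; rewrite /C0 /C1 /C2 /C3 /C4 !c3E //; neqs; move/eqP; neqs; done
        | have := H p4; rewrite /C0 /C1 /C2 /C3 /C4 !c3E //; neqs; move/eqP; neqs; done ];
  try (rewrite eq_sym; done).

Lemma C10 : C1 != C0. Proof. cne. Qed.
Lemma C20 : C2 != C0. Proof. cne. Qed.
Lemma C21 : C2 != C1. Proof. cne. Qed.
Lemma C30 : C3 != C0. Proof. cne. Qed.
Lemma C31 : C3 != C1. Proof. cne. Qed.
Lemma C32 : C3 != C2. Proof. cne. Qed.
Lemma C40 : C4 != C0. Proof. cne. Qed.
Lemma C41 : C4 != C1. Proof. cne. Qed.
Lemma C42 : C4 != C2. Proof. cne. Qed.
Lemma C43 : C4 != C3. Proof. cne. Qed.

Lemma fin_case (x : 'S_n) r0 r1 r2 :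
  g r0 = r1 -> g r1 = r2 -> x r0 = r1 -> x r1 = r2 -> x r2 = r0 ->
  r0 != r1 -> r0 != r2 -> r1 != r2 ->
  (forall j, j != r0 -> j != r1 -> j != r2 -> x j = j) ->
  (x = C0 \/ x = C1 \/ x = C2 \/ x = C3 \/ x = C4).
Proof.
move=> e1 e2 x0 x1 x2 d01 d02 d12 xf.
have M : r0 \in [:: p0; p1; p2; p3; p4].
  apply/negPn/negP => /gf; rewrite e1 => E; by rewrite E eqxx in d01.
move: e1 e2 x0 x1 x2 d01 d02 d12 xf.
move: M; rewrite !inE => /orP[/eqP ->|/orP[/eqP ->|/orP[/eqP ->|/orP[/eqP ->|/eqP ->]]]];
  rewrite ?g0 ?g1 ?g2 ?g3 ?g4 => <-; rewrite ?g0 ?g1 ?g2 ?g3 ?g4 => <- *.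
- by left; apply: perm_c3.
- by right; left; apply: perm_c3.
- by do 2 right; left; apply: perm_c3.
- by do 3 right; left; apply: perm_c3.
- by do 4 right; apply: perm_c3.
Qed.

Lemma classify (x : 'S_n) : is_kcycle 3 x -> is_kcycle 3 (g * x^-1)%g ->
  (x = C0 \/ x = C1 \/ x = C2 \/ x = C3 \/ x = C4).
Proof.
move=> Hx Hy; set y := (g * x^-1)%g in Hy.
have gxy j : g j = x (y j) by rewrite /y permM permKV.
case: (kcycle3P Hx) => u [hu1 hu2 hu12 hu3 fx].
case: (kcycle3P Hy) => w [hw1 hw2 hw12 hw3 fy].
have ymv j : y j != j -> j \in [:: w; y w; y (y w)].
  apply: contraR; rewrite !inE !negb_or => /and3P [j0 j1 j2].
  by rewrite fy.
have xmv j : x j != j -> j \in [:: u; x u; x (x u)].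
  apply: contraR; rewrite !inE !negb_or => /and3P [j0 j1 j2].
  by rewrite fx.
have gmv j : g j != j -> (y j != j) || (x j != j).
  rewrite gxy; case: (eqVneq (y j) j) => [->|] //=.
have pmv j : j \in [:: p0; p1; p2; p3; p4] -> g j != j.
  rewrite !inE => /orP[/eqP ->|/orP[/eqP ->|/orP[/eqP ->|/orP[/eqP ->|/eqP ->]]]];
  by rewrite ?g0 ?g1 ?g2 ?g3 ?g4.
have key a b c : (forall j, x j != j -> j \in [:: a; b; c]) ->
    y a != a -> y b != b -> False.
  move=> Hm ya yb.
  have : (size [:: p0; p1; p2; p3; p4] <= size [:: c; w; y w; y (y w)])%N.
    apply: uniq_leq_size; first by rewrite /= !inE; neqs.
    move=> j jp; case/orP: (gmv j (pmv j jp)) => [/ymv|/Hm].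
      by rewrite !inE => ->; rewrite !orbT.
    rewrite !inE => /orP[/eqP e|/orP[/eqP e|/eqP e]].
    - by move: (ymv _ ya); rewrite -e !inE => ->; rewrite orbT.
    - by move: (ymv _ yb); rewrite -e !inE => ->; rewrite orbT.
    - by rewrite e eqxx.
  by [].
have Hm1 : forall j, x j != j -> j \in [:: x u; x (x u); u].
  by move=> j /xmv; rewrite !inE; case/or3P => ->; rewrite ?orbT.
have Hm2 : forall j, x j != j -> j \in [:: u; x (x u); x u].
  by move=> j /xmv; rewrite !inE; case/or3P => ->; rewrite ?orbT.
have hu3' : x (x (x (x u))) = x u by rewrite hu3.
case: (eqVneq (y u) u) => e0; case: (eqVneq (y (x u)) (x u)) => e1;
  case: (eqVneq (y (x (x u))) (x (x u))) => e2.
- apply: (fin_case (r0 := u) (r1 := x u) (r2 := x (x u)));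
    by rewrite ?gxy ?e0 ?e1 ?e2.
- apply: (fin_case (r0 := u) (r1 := x u) (r2 := x (x u)));
    by rewrite ?gxy ?e0 ?e1.
- apply: (fin_case (r0 := x (x u)) (r1 := u) (r2 := x u));
    [by rewrite gxy e2|by rewrite gxy e0|by []|by []|by []|by rewrite eq_sym
    |by rewrite eq_sym|by []|by move=> j ja jb jc; apply: fx].
- by case: (key _ _ _ Hm1 e1 e2).
- apply: (fin_case (r0 := x u) (r1 := x (x u)) (r2 := u));
    [by rewrite gxy e1|by rewrite gxy e2|by []|by []|by []|by []
    |by rewrite eq_sym|by rewrite eq_sym|by move=> j ja jb jc; apply: fx].
- by case: (key _ _ _ Hm2 e0 e2).
- by case: (key _ _ _ xmv e0 e1).
- by case: (key _ _ _ xmv e0 e1).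
Qed.

Lemma phi_reduce (W : zmodType) (al : 'S_n -> Vn n -> Vn n -> W) a b
  (Ha1 : forall x u w, ~~ is_kcycle 3 x -> al x u w = 0)
  (Ha2 : forall x u, al x u 0 = 0) v1 v2 v3 :
  phi_g al (kappaL_tri a b) g v1 v2 v3 =
  phi_xy al (kappaL_tri a b) C0 C2 v1 v2 v3 + phi_xy al (kappaL_tri a b) C1 C3 v1 v2 v3
  + phi_xy al (kappaL_tri a b) C2 C4 v1 v2 v3 + phi_xy al (kappaL_tri a b) C3 C0 v1 v2 v3
  + phi_xy al (kappaL_tri a b) C4 C1 v1 v2 v3.
Proof.
rewrite /phi_g.
rewrite (eq_bigr (fun x => phi_xy al (kappaL_tri a b) x (g * x^-1)%g v1 v2 v3)); last first.
  move=> x _; apply: big_pred1 => y /=.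
  apply/forallP/eqP => [H|->].
    apply/permP => i; rewrite permM; apply/esym/invP; apply/esym/eqP; exact: H.
  by move=> i; rewrite permM permKV.
rewrite (bigD1 C0) // (bigD1 C1) ?C10 // (bigD1 C2) ?C20 ?C21 //.
rewrite (bigD1 C3) ?C30 ?C31 ?C32 // (bigD1 C4) ?C40 ?C41 ?C42 ?C43 //.
rewrite big1 ?addr0; last first.
  move=> x Hx.
  case: (boolP (is_kcycle 3 x)) => Hx3; last by rewrite /phi_xy !Ha1 // !addr0.
  case: (boolP (is_kcycle 3 (g * x^-1)%g)) => Hy3;
    last by rewrite /phi_xy !kappaLE (negbTE Hy3) !Ha2 !addr0.
  exfalso; case: (classify Hx3 Hy3) => [e|[e|[e|[e|e]]]];
    by move: Hx; rewrite e eqxx ?andbF ?andFb.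
rewrite gC0 gC1 gC2 gC3 gC4 /= [in LHS]addr0 [in LHS]addrA [in LHS]addrA [in LHS]addrA. reflexivity.
Qed.
End Main.



Lemma Ksc0 n (s : 'S_n) u : Ksc s u 0 = 0.
Proof. by rewrite /Ksc big1 // => l _; rewrite big1 // => m _; rewrite mxE mulr0 mul0r. Qed.

Section Final.
Variables (n : nat) (g : 'S_n) (p0 p1 p2 p3 p4 : 'I_n).
Hypotheses (h01 : p0 != p1) (h02 : p0 != p2) (h03 : p0 != p3) (h04 : p0 != p4)
  (h12 : p1 != p2) (h13 : p1 != p3) (h14 : p1 != p4)
  (h23 : p2 != p3) (h24 : p2 != p4) (h34 : p3 != p4).
Hypotheses (g0 : g p0 = p1) (g1 : g p1 = p2) (g2 : g p2 = p3) (g3 : g p3 = p4)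
  (g4 : g p4 = p0).
Hypothesis gf : forall j, j \notin [:: p0; p1; p2; p3; p4] -> g j = j.
Let h10 : p1 != p0. Proof. by rewrite eq_sym. Qed.
Let h20 : p2 != p0. Proof. by rewrite eq_sym. Qed.
Let h30 : p3 != p0. Proof. by rewrite eq_sym. Qed.
Let h40 : p4 != p0. Proof. by rewrite eq_sym. Qed.
Let h21 : p2 != p1. Proof. by rewrite eq_sym. Qed.
Let h31 : p3 != p1. Proof. by rewrite eq_sym. Qed.
Let h41 : p4 != p1. Proof. by rewrite eq_sym. Qed.
Let h32 : p3 != p2. Proof. by rewrite eq_sym. Qed.
Let h42 : p4 != p2. Proof. by rewrite eq_sym. Qed.
Let h43 : p4 != p3. Proof. by rewrite eq_sym. Qed.

Ltac pcases j :=
  case: (eqVneq j p0) => [->|?];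
  [|case: (eqVneq j p1) => [->|?];
  [|case: (eqVneq j p2) => [->|?];
  [|case: (eqVneq j p3) => [->|?];
  [|case: (eqVneq j p4) => [->|?]]]]].

Lemma partC a b c v1 v2 v3 : phi_g (kappaC_tri c) (kappaL_tri a b) g v1 v2 v3 = 0.
Proof.
rewrite (phi_reduce h01 h02 h03 h04 h12 h13 h14 h23 h24 h34 g0 g1 g2 g3 g4 gf).
- rewrite /C0 /C1 /C2 /C3 /C4 !phiC_term // /Tm /Sy.
  ring.
- by move=> x u w H; rewrite kappaCE (negbTE H).
- by move=> x u; rewrite kappaCE Ksc0 mulr0; case: ifP.
Qed.


Lemma HL1 a b : forall (x : 'S_n) (u w : Vn n), ~~ is_kcycle 3 x -> kappaL_tri a b x u w = 0.
Proof. by move=> x u w H; rewrite kappaLE (negbTE H). Qed.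
Lemma HL2 a b : forall (x : 'S_n) (u : Vn n), kappaL_tri a b x u 0 = 0.
Proof. by move=> x u; rewrite kappaLE Ksc0 scale0r; case: ifP. Qed.

Lemma Tm0 (r0 r1 r2 r3 r4 : 'I_n) (v1 v2 v3 : Vn n) :
  v1 r0 0 = 0 -> v1 r1 0 = 0 -> v1 r2 0 = 0 -> v1 r3 0 = 0 -> v1 r4 0 = 0 ->
  Tm r0 r1 r2 r3 r4 v1 v2 v3 = 0.
Proof. move=> e0 e1 e2 e3 e4; rewrite /Tm /Sy e0 e1 e2 e3 e4; ring. Qed.

Lemma partFix a b i j k : g i = i ->
  phi_g (kappaL_tri a b) (kappaL_tri a b) g (evec i) (evec j) (evec k) = 0.
Proof.
move=> gi.
have hi0 : p0 != i by apply: contra_neq h01 => e; rewrite -g0 e gi.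
have hi1 : p1 != i by apply: contra_neq h12 => e; rewrite -g1 e gi.
have hi2 : p2 != i by apply: contra_neq h23 => e; rewrite -g2 e gi.
have hi3 : p3 != i by apply: contra_neq h34 => e; rewrite -g3 e gi.
have hi4 : p4 != i by apply: contra_neq h40 => e; rewrite -g4 e gi.
have E m : m != i -> evec i m 0 = 0 by move=> hm; rewrite evecE (negbTE hm).
rewrite (phi_reduce h01 h02 h03 h04 h12 h13 h14 h23 h24 h34 g0 g1 g2 g3 g4 gf
   a b (HL1 a b) (HL2 a b)).
rewrite /C0 /C1 /C2 /C3 /C4 !phiL_term // !Tm0 ?E //.
by rewrite !mulr0 !scale0r !addr0.
Qed.

Lemma part3 a b :
  phi_g (kappaL_tri a b) (kappaL_tri a b) g (evec p0) (evec p1) (evec p2)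
  = (2 * (a - b) ^+ 2) *: (evec p0 + evec p1 - evec p2 - evec p3).
Proof.
rewrite (phi_reduce h01 h02 h03 h04 h12 h13 h14 h23 h24 h34 g0 g1 g2 g3 g4 gf
   a b (HL1 a b) (HL2 a b)).
rewrite /C0 /C1 /C2 /C3 /C4 !phiL_term // /Tm /Sy !evecE; neqs.
apply/matrixP => r j; rewrite ord1 !mxE !c3E //.
rewrite ?mulr0n ?mulr1n.
pcases r; neqs; rewrite ?mulr0n ?mulr1n; ring.
Qed.

Lemma part4 a b :
  phi_g (kappaL_tri a b) (kappaL_tri a b) g (evec p0) (evec p1) (evec p3)
  = (2 * (a - b) ^+ 2) *: (- (2%:R *: evec p0) + 2%:R *: evec p2 + evec p3 - evec p4).
Proof.
rewrite (phi_reduce h01 h02 h03 h04 h12 h13 h14 h23 h24 h34 g0 g1 g2 g3 g4 gf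
   a b (HL1 a b) (HL2 a b)).
rewrite /C0 /C1 /C2 /C3 /C4 !phiL_term // /Tm /Sy !evecE; neqs.
apply/matrixP => r j; rewrite ord1 !mxE !c3E //.
rewrite ?mulr0n ?mulr1n.
pcases r; neqs; rewrite ?mulr0n ?mulr1n; ring.
Qed.
End Final.


Lemma kc5_at n (g : 'S_n) i : is_kcycle 5 g -> g i != i ->
  [/\ uniq [:: i; g i; g (g i); g (g (g i)); g (g (g (g i)))],
      g (g (g (g (g i)))) = i &
      forall j, j \notin [:: i; g i; g (g i); g (g (g i)); g (g (g (g i)))] -> g j = j].
Proof.
case/existsP => p /andP [/eqP H5 /forallP Hf] gi.
have Hi : i \in porbit g p.
  apply/negPn/negP => Hn; move: (implyP (Hf i) Hn); by rewrite (negbTE gi).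
have E : porbit g i = porbit g p by apply/eqP; rewrite eq_porbit_mem.
have H5' : #|porbit g i| = 5%N by rewrite E.
have U := uniq_traject_porbit g i; rewrite H5' /= in U.
split => //.
  by have := iter_porbit g i; rewrite H5'.
move=> j jn; apply/eqP; move/implyP: (Hf j); apply.
by rewrite -E porbit_traject H5'.
Qed.

Lemma kc5_ex n (g : 'S_n) : is_kcycle 5 g -> exists i, g i != i.
Proof.
case/existsP => p /andP [/eqP H5 _]; exists p.
have U := uniq_traject_porbit g p; rewrite H5 /= in U.
by apply: contraTneq U => e; rewrite e /= inE eqxx.
Qed.

Lemma all_at n (g : 'S_n) i a b c : is_kcycle 5 g -> g i != i ->
  [/\ forall v1 v2 v3 : Vn n, phi_g (kappaC_tri c) (kappaL_tri a b) g v1 v2 v3 = 0,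
      forall i' j k, g i' = i' ->
        phi_g (kappaL_tri a b) (kappaL_tri a b) g (evec i') (evec j) (evec k) = 0,
      phi_g (kappaL_tri a b) (kappaL_tri a b) g (evec i) (evec (g i)) (evec (g (g i)))
       = (2 * (a - b) ^+ 2) *: (evec i + evec (g i) - evec (g (g i)) - evec (g (g (g i))))
    & phi_g (kappaL_tri a b) (kappaL_tri a b) g (evec i) (evec (g i)) (evec (g (g (g i))))
       = (2 * (a - b) ^+ 2) *: (- (2%:R *: evec i) + 2%:R *: evec (g (g i))
             + evec (g (g (g i))) - evec (g (g (g (g i)))))].
Proof.
move=> Hg gi; case: (kc5_at Hg gi) => U g4 gf.
case/and5P: U => A B C D _.
move: A B C D; rewrite !inE !negb_or => /and4P [h01 h02 h03 h04] /and3P [h12 h13 h14]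
  /andP [h23 h24] h34.
split.
- by move=> v1 v2 v3; apply: partC h01 h02 h03 h04 h12 h13 h14 h23 h24 h34
    (erefl _) (erefl _) (erefl _) (erefl _) g4 gf a b c v1 v2 v3.
- by move=> i' j k; apply: partFix h01 h02 h03 h04 h12 h13 h14 h23 h24 h34
    (erefl _) (erefl _) (erefl _) (erefl _) g4 gf a b i' j k.
- exact: part3 h01 h02 h03 h04 h12 h13 h14 h23 h24 h34
    (erefl _) (erefl _) (erefl _) (erefl _) g4 gf a b.
- exact: part4 h01 h02 h03 h04 h12 h13 h14 h23 h24 h34
    (erefl _) (erefl _) (erefl _) (erefl _) g4 gf a b.
Qed.

Unset Implicit Arguments.

Theorem proposition7p3 (n : nat) (hn : (3 <= n)%N) (a b c : CC) (g : 'S_n) :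
  is_kcycle 5 g ->
  (forall v1 v2 v3 : Vn n,
      phi_g (kappaC_tri c) (kappaL_tri a b) g v1 v2 v3 = 0)
  /\ (forall i : 'I_n, evec i \in fixed_space g ->
        forall j k : 'I_n,
          phi_g (kappaL_tri a b) (kappaL_tri a b) g (evec i) (evec j) (evec k) = 0)
  /\ (forall i : 'I_n,
        phi_g (kappaL_tri a b) (kappaL_tri a b) g
          (evec i) (pact g (evec i)) (pact ((g ^+ 2)%g) (evec i))
        = (2 * (a - b) ^+ 2) *:
            (evec i + pact g (evec i) - pact ((g ^+ 2)%g) (evec i)
             - pact ((g ^+ 3)%g) (evec i)))
  /\ (forall i : 'I_n,
        phi_g (kappaL_tri a b) (kappaL_tri a b) g
          (evec i) (pact g (evec i)) (pact ((g ^+ 3)%g) (evec i))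
        = (2 * (a - b) ^+ 2) *:
            (- (2%:R *: evec i) + 2%:R *: pact ((g ^+ 2)%g) (evec i)
             + pact ((g ^+ 3)%g) (evec i) - pact ((g ^+ 4)%g) (evec i))).
Proof.
move=> Hg.
case: (kc5_ex Hg) => p gp.
case: (all_at a b c Hg gp) => HC HF _ _.
have Hfix i : evec i \in fixed_space g -> g i = i.
  rewrite /fixed_space unfold_in => /eqP; rewrite pact_evec => E.
  case: (eqVneq (g i) i) => // ne; exfalso.
  have := congr1 (fun M : Vn n => M i 0) E; rewrite /= !evecE eqxx.
  rewrite eq_sym (negbTE ne) => /eqP; rewrite mulr0n mulr1n eq_sym oner_eq0.
  by [].
split; first exact: HC.
split; first by move=> i /Hfix gi j k; exact: HF.
split.
- move=> i; case: (eqVneq (g i) i) => gi.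
    rewrite !pact_evec !permX /= !gi (HF i i i gi).
    by rewrite addrK subrr scaler0.
  case: (all_at a b c Hg gi) => _ _ H3 _.
  by rewrite !pact_evec !permX /=.
- move=> i; case: (eqVneq (g i) i) => gi.
    rewrite !pact_evec !permX /= !gi (HF i i i gi).
    by rewrite addNr add0r subrr scaler0.
  case: (all_at a b c Hg gi) => _ _ _ H4.
  by rewrite !pact_evec !permX /=.
Qed.
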